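(* Let $M\ge K$, let $\mathbf h_1,\dots,\mathbf h_K\in\mathbb C^{1\times M}$ be linearly independent, and let $\mu_1\ge\mu_2\ge\dots\ge\mu_K\ge0$ with $\sum_k\mu_k=1$. For powers $P_1,\dots,P_K\ge0$ let $\mathbf A^{(0)}=\mathbf I_M$ and $\mathbf A^{(k-1)}=\mathbf I_M+\sum_{j=1}^{k-1}P_j\mathbf h_j^H\mathbf h_j$, and define $R(P_1,\dots,P_K)=\sum_{k=1}^K\mu_k\log_2\left(1+P_k\mathbf h_k(\mathbf A^{(k-1)})^{-1}\mathbf h_k^H\right)$ and $$\mathcal C_{\mathrm{DPC}}(\boldsymbol\mu,\mathbf H,P)=\max_{P_k\ge0,\ \sum_kP_k\le P}R(P_1,\dots,P_K).$$ Then the allocation $P_k=\mu_kP$, $k=1,\dots,K$, is asymptotically optimal at high SNR: $$\lim_{P\to\infty}\left[\mathcal C_{\mathrm{DPC}}(\boldsymbol\mu,\mathbf H,P)-R(\mu_1P,\dots,\mu_KP)\right]=0.$$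
   Context: $\mathcal C_{\mathrm{DPC}}(\boldsymbol\mu,\mathbf H,P)$ is the maximum weighted sum rate $\sum_k\mu_kR_k$ over the dirty-paper-coding capacity region of the MIMO broadcast channel with $M$ transmit antennas and $K$ single-antenna users with channel row vectors $\mathbf h_k$, unit noise and total power $P$, written via the dual multiple-access channel with user $k$ decoded in the presence of users $1,\dots,k-1$. *)

(* Defs.v *)
From HB Require Import structures.
From mathcomp Require Import all_boot all_order all_algebra.
From mathcomp Require Import all_classical all_reals all_analysis.
From mathcomp Require Import complex.
Set Implicit Arguments. Unset Strict Implicit. Unset Printing Implicit Defensive.
Import Order.TTheory GRing.Theory Num.Theory.
Local Open Scope ring_scope.

Definition log2 (R : realType) (x : R) : R := ln x / ln 2.

Definition adjmx (R : rcfType) (m n : nat) (A : 'M[R[i]]_(m, n)) : 'M[R[i]]_(n, m) :=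
  (map_mx (@conjc R) A)^T.

(* A^(k-1) = I_M + sum_{j < k} P_j h_j^H h_j ; H has rows h_1..h_K, indices 0-based *)
Definition Amat (R : rcfType) (K M : nat) (H : 'M[R[i]]_(K, M)) (P : 'I_K -> R)
  (k : 'I_K) : 'M[R[i]]_M :=
  1%:M + \sum_(j < K | (j < k)%N) real_complex R (P j) *: (adjmx (row j H) *m row j H).

(* R(P_1..P_K) = sum_k mu_k log2(1 + P_k h_k (A^(k-1))^{-1} h_k^H).
   The quadratic form is real (A Hermitian positive definite); we take its real part. *)
Definition rate (R : realType) (K M : nat) (mu : 'I_K -> R) (H : 'M[R[i]]_(K, M))
  (P : 'I_K -> R) : R :=
  \sum_(k < K) mu k *
    log2 (1 + P k * complex.Re ((row k H *m invmx (Amat H P k) *m adjmx (row k H)) 0 0)).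

(* C_DPC(mu, H, P) = max over P_k >= 0, sum P_k <= P of rate; written as sup
   (the max is attained, the feasible set being compact and rate continuous). *)
Definition C_DPC (R : realType) (K M : nat) (mu : 'I_K -> R) (H : 'M[R[i]]_(K, M))
  (Ptot : R) : R :=
  sup [set r | exists P : 'I_K -> R,
         [/\ (forall k, 0 <= P k), \sum_(k < K) P k <= Ptot & r = rate mu H P]].

(* Main.v *)
Require Import Defs.
From HB Require Import structures.
From mathcomp Require Import all_boot all_order all_algebra.
From mathcomp Require Import all_classical all_reals all_analysis.
From mathcomp Require Import complex.
From mathcomp Require Import ring lra.

Import Order.TTheory GRing.Theory Num.Theory.
Local Open Scope ring_scope.
Local Open Scope complex_scope.

Lemma adjmxK {R : rcfType} {m n} (A : 'M[R[i]]_(m, n)) : adjmx (adjmx A) = A.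
Proof. by apply/matrixP => i j; rewrite /adjmx !mxE conjcK. Qed.

Lemma adjmxM {R : rcfType} {m n p} (A : 'M[R[i]]_(m, n)) (B : 'M[R[i]]_(n, p)) :
  adjmx (A *m B) = adjmx B *m adjmx A.
Proof. by rewrite /adjmx map_mxM trmx_mul. Qed.

Lemma adjmxD {R : rcfType} {m n} (A B : 'M[R[i]]_(m, n)) :
  adjmx (A + B) = adjmx A + adjmx B.
Proof. by apply/matrixP => i j; rewrite /adjmx !mxE rmorphD. Qed.

Lemma adjmxZ {R : rcfType} {m n} c (A : 'M[R[i]]_(m, n)) :
  adjmx (c *: A) = (conjc c) *: adjmx A.
Proof. by apply/matrixP => i j; rewrite /adjmx !mxE rmorphM. Qed.

Lemma adjmx1 {R : rcfType} {n} : adjmx (1%:M : 'M[R[i]]_n) = 1%:M.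
Proof. by apply/matrixP => i j; rewrite /adjmx !mxE eq_sym; case: eqP => _; rewrite ?conjc1 ?conjc0. Qed.

Lemma adjmx_sum {R : rcfType} {m n} (I : finType) (P : pred I) (F : I -> 'M[R[i]]_(m, n)) :
  adjmx (\sum_(i | P i) F i) = \sum_(i | P i) adjmx (F i).
Proof.
have h0 : adjmx (0 : 'M[R[i]]_(m, n)) = 0 by apply/matrixP => i j; rewrite /adjmx !mxE conjc0.
exact: (big_morph _ (@adjmxD R m n) h0).
Qed.

Lemma adjmx_inv {R : rcfType} {n} (A : 'M[R[i]]_n) : adjmx (invmx A) = invmx (adjmx A).
Proof. by rewrite /adjmx map_invmx trmx_inv. Qed.

Definition Bm (R : rcfType) (K M : nat) (H : 'M[R[i]]_(K, M)) (P : 'I_K -> R)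
  (S : pred 'I_K) : 'M[R[i]]_M :=
  1%:M + \sum_(j | S j) (P j)%:C *: (adjmx (row j H) *m row j H).

Arguments Bm {R K M} H P S.

Lemma Amat_Bm {R : rcfType} {K M} (H : 'M[R[i]]_(K, M)) P k :
  Amat H P k = Bm H P (fun j => (j < k)%N).
Proof. by []. Qed.

Lemma Bm_herm {R : rcfType} {K M} (H : 'M[R[i]]_(K, M)) P (S : pred 'I_K) :
  adjmx (Bm H P S) = Bm H P S.
Proof.
rewrite /Bm adjmxD adjmx1 adjmx_sum; congr (_ + _); apply: eq_bigr => j _.
by rewrite adjmxZ conjc_real adjmxM adjmxK.
Qed.

Definition qf {R : rcfType} {M} (x : 'rV[R[i]]_M) (A : 'M[R[i]]_M) : R[i] :=
  (x *m A *m adjmx x) 0 0.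

Lemma nrm_ge0 {R : rcfType} {n} (x : 'rV[R[i]]_n) : 0 <= (x *m adjmx x) 0 0.
Proof.
rewrite !mxE; apply: sumr_ge0 => j _; rewrite /adjmx !mxE; exact: mulcJ_ge0.
Qed.

Lemma nrm_eq0 {R : rcfType} {n} (x : 'rV[R[i]]_n) : (x *m adjmx x) 0 0 = 0 -> x = 0.
Proof.
rewrite !mxE => /eqP; rewrite psumr_eq0 => [/allP h|j _]; last first.
  by rewrite /adjmx !mxE; exact: mulcJ_ge0.
apply/rowP => j; rewrite mxE; have := h j (mem_index_enum j).
by rewrite /adjmx !mxE /= mulf_eq0 conjc_eq0 orbb => /eqP.
Qed.

Lemma Bm_quad {R : rcfType} {K M} (H : 'M[R[i]]_(K, M)) P (S : pred 'I_K) (x : 'rV[R[i]]_M) :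
  qf x (Bm H P S) = (x *m adjmx x) 0 0 +
     \sum_(j | S j) (P j)%:C * ((x *m adjmx (row j H)) *m adjmx (x *m adjmx (row j H))) 0 0.
Proof.
rewrite /qf /Bm mulmxDr mulmx1 mulmxDl mxE; congr (_ + _).
rewrite mulmx_sumr mulmx_suml summxE; apply: eq_bigr => j _.
by rewrite -scalemxAr -scalemxAl mxE adjmxM adjmxK !mulmxA.
Qed.

Lemma Bm_psd {R : rcfType} {K M} (H : 'M[R[i]]_(K, M)) P (S : pred 'I_K) (x : 'rV[R[i]]_M) :
  (forall j, S j -> 0 <= P j) -> (x *m adjmx x) 0 0 <= qf x (Bm H P S).
Proof.
move=> hP; rewrite Bm_quad lerDl; apply: sumr_ge0 => j hj.
by apply: mulr_ge0; [rewrite ler0c; exact: hP | exact: nrm_ge0].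
Qed.

Lemma Bm_unit {R : rcfType} {K M} (H : 'M[R[i]]_(K, M)) P (S : pred 'I_K) :
  (forall j, S j -> 0 <= P j) -> Bm H P S \in unitmx.
Proof.
move=> hP; rewrite -row_free_unit -kermx_eq0; apply/eqP/row_matrixP => i.
rewrite row0; set x := row i _.
have : (x <= kermx (Bm H P S))%MS by exact: row_sub.
move/sub_kermxP => hx; apply: nrm_eq0; apply/eqP; rewrite eq_le nrm_ge0 andbT.
by have := @Bm_psd _ _ _ H P S x hP; rewrite /qf hx mul0mx !mxE.
Qed.

Lemma ge0_RRe {R : rcfType} {x : R[i]} : 0 <= x -> x = (complex.Re x)%:C.
Proof. by move=> hx; rewrite RRe_real // ger0_real. Qed.

Lemma Bm_inv_qf_ge0 {R : rcfType} {K M} (H : 'M[R[i]]_(K, M)) P (S : pred 'I_K) (h : 'rV[R[i]]_M) :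
  (forall j, S j -> 0 <= P j) -> 0 <= qf h (invmx (Bm H P S)).
Proof.
move=> hP; set Y := Bm H P S; have hY : Y \in unitmx by exact: Bm_unit.
set z := h *m invmx Y.
have e : adjmx h = Y *m adjmx z.
  by rewrite /z adjmxM adjmx_inv Bm_herm mulmxA mulmxV // mul1mx.
have -> : qf h (invmx Y) = qf z Y by rewrite /qf e !mulmxA.
exact: le_trans (nrm_ge0 z) (@Bm_psd _ _ _ H P S z hP).
Qed.

Lemma Bm_orth {R : rcfType} {K M} (H : 'M[R[i]]_(K, M)) P (S : pred 'I_K) (r : 'rV[R[i]]_M) :
  (forall j, S j -> r *m adjmx (row j H) = 0) -> r *m Bm H P S = r.
Proof.
move=> hr; rewrite /Bm mulmxDr mulmx1 mulmx_sumr big1 ?addr0 // => j hj.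
by rewrite -scalemxAr mulmxA (hr j hj) mul0mx scaler0.
Qed.

Lemma Bm_inv_lb {R : rcfType} {K M} (H : 'M[R[i]]_(K, M)) P (S : pred 'I_K) (h r : 'rV[R[i]]_M) :
  (forall j, S j -> 0 <= P j) ->
  (forall j, S j -> r *m adjmx (row j H) = 0) -> r *m adjmx h = 1%:M ->
  ((complex.Re ((r *m adjmx r) 0 0))^-1)%:C <= qf h (invmx (Bm H P S)).
Proof.
move=> hP hr hrh; set Y := Bm H P S; have hY : Y \in unitmx by exact: Bm_unit.
set e := complex.Re _.
have ee : (r *m adjmx r) 0 0 = e%:C by rewrite {1}(ge0_RRe (nrm_ge0 r)).
have rY : r *m Y = r by exact: Bm_orth.
have rYi : r *m invmx Y = r by rewrite -{1}rY mulmxK.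
set z := h *m invmx Y.
set c := (e^-1)%:C.
have cc : conjc c = c by rewrite conjc_real.
set w := z + (- c) *: r.
have wY : w *m Y = h + (- c) *: r by rewrite mulmxDl -scalemxAl rY /z mulmxKV.
have aw : adjmx w = adjmx z + (- c) *: adjmx r.
  have cc' : conjc (- c) = - c by rewrite /c -rmorphN conjc_real.
  by rewrite adjmxD adjmxZ cc'.
have hrh' : h *m adjmx r = 1%:M by rewrite -[h]adjmxK -adjmxM hrh adjmx1.
have rz : r *m adjmx z = 1%:M by rewrite /z adjmxM adjmx_inv Bm_herm mulmxA rYi hrh.
have hz : h *m adjmx z = h *m invmx Y *m adjmx h by rewrite /z adjmxM adjmx_inv Bm_herm mulmxA.
have := le_trans (nrm_ge0 w) (@Bm_psd _ _ _ H P S w hP).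
rewrite /qf wY aw mulmxDl !mulmxDr -!scalemxAl -!scalemxAr hrh' rz hz.
have ee' : r *m adjmx r = (e%:C)%:M.
  by apply/matrixP => i j; rewrite !ord1 -ee [RHS]mxE.
rewrite ee'; set T := h *m invmx Y *m adjmx h.
rewrite !mxE /=.
have e0 : e != 0.
  apply/eqP => e0.
  have r0 : r = 0 by apply: nrm_eq0; rewrite ee e0.
  move: hrh; rewrite r0 mul0mx => /matrixP/(_ 0 0); rewrite !mxE /= => /eqP.
  by rewrite eq_sym oner_eq0.
have ce : c * e%:C = 1 by rewrite -rmorphM mulVf.
by rewrite !mulr1 mulr1n mulrA mulrNN -mulrA ce mulr1 addNr addr0 subr_ge0.
Qed.

Lemma det_rank1 {F : fieldType} {n} (u : 'cV[F]_n) (v : 'rV[F]_n) :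
  \det (1%:M + u *m v) = 1 + (v *m u) 0 0.
Proof.
have e1 : block_mx (1%:M + u *m v) (- u) 0 1%:M *m block_mx 1%:M 0 v 1%:M
        = block_mx 1%:M 0 v 1%:M *m block_mx 1%:M (- u) 0 (1%:M + v *m u).
  rewrite !mulmx_block !mulmx1 !mul1mx !mulmx0 !mul0mx !addr0 !add0r.
  by rewrite mulNmx addrK mulmxN addrC addrK.
have := congr1 determinant e1.
rewrite !det_mulmx !det_ublock !det_lblock !det1 !mulr1 !mul1r.
by move=> ->; rewrite det_mx11 !mxE.
Qed.

Lemma det_update {R : rcfType} {n} (Y : 'M[R[i]]_n) (c : R[i]) (h : 'rV[R[i]]_n) :
  Y \in unitmx -> \det (Y + c *: (adjmx h *m h)) = \det Y * (1 + c * qf h (invmx Y)).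
Proof.
move=> hY.
have -> : Y + c *: (adjmx h *m h) = Y *m (1%:M + (invmx Y *m (c *: adjmx h)) *m h).
  by rewrite mulmxDr mulmx1 !mulmxA mulmxV // mul1mx scalemxAl.
rewrite det_mulmx det_rank1; congr (_ * (1 + _)).
by rewrite /qf -!scalemxAr mulmxA mxE.
Qed.

Lemma Bm_split {R : rcfType} {K M} (H : 'M[R[i]]_(K, M)) P (S : pred 'I_K) m :
  S m -> Bm H P S = Bm H P [pred j | S j && (j != m)] + (P m)%:C *: (adjmx (row m H) *m row m H).
Proof. by move=> Sm; rewrite /Bm (bigD1 m) //= [X in 1%:M + X]addrC addrA. Qed.

Lemma Bm_ext {R : rcfType} {K M} (H : 'M[R[i]]_(K, M)) P P' (S S' : pred 'I_K) :
  (forall j, S j = S' j) -> (forall j, S j -> P j = P' j) -> Bm H P S = Bm H P' S'.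
Proof.
move=> eS eP; rewrite /Bm (eq_bigl _ _ eS); congr (_ + _); apply: eq_bigr => j hj.
by rewrite eP // eS.
Qed.

Lemma Bm_lt_step {R : rcfType} {K M} (H : 'M[R[i]]_(K, M)) P (k : 'I_K) :
  Bm H P (fun j => (j < k.+1)%N) = Bm H P (fun j => (j < k)%N) + (P k)%:C *: (adjmx (row k H) *m row k H).
Proof.
rewrite (@Bm_split _ _ _ H P _ k) //=; congr (_ + _); apply: Bm_ext => // j /=.
by rewrite ltnS ltn_neqAle andbC (inj_eq val_inj).
Qed.

Lemma qf_mx11 {R : rcfType} {n} (h : 'rV[R[i]]_n) (A : 'M[R[i]]_n) :
  h *m A *m adjmx h = (qf h A)%:M.
Proof. by rewrite /qf [LHS]mx11_scalar. Qed.

Lemma qf_update {R : rcfType} {n} (Y : 'M[R[i]]_n) (c : R[i]) (h : 'rV[R[i]]_n) :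
  Y \in unitmx -> 1 + c * qf h (invmx Y) != 0 ->
  qf h (invmx (Y + c *: (adjmx h *m h))) = qf h (invmx Y) / (1 + c * qf h (invmx Y)).
Proof.
move=> hY hne; set Z := Y + _; set t := qf h (invmx Y).
have hZ : Z \in unitmx by rewrite unitmxE det_update // unitrM -unitmxE hY unitfE.
have e : h *m invmx Y *m Z = (1 + c * t) *: h.
  rewrite mulmxDr mulmxKV // -scalemxAr !mulmxA qf_mx11 mul_scalar_mx scalerA.
  by rewrite scalerDl scale1r mulrC.
have e2 : h *m invmx Z = (1 + c * t)^-1 *: (h *m invmx Y).
  apply: (canLR (mulmxK hZ)); rewrite -scalemxAl e scalerA mulVf // scale1r.
  done.
by rewrite /qf e2 -!scalemxAl mxE mulrC.
Qed.

Definition DET (R : rcfType) K M (H : 'M[R[i]]_(K, M)) (P : 'I_K -> R) (n : nat) : R[i] :=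
  \det (Bm H P (fun j => (j < n)%N)).

Definition qv (R : rcfType) K M (H : 'M[R[i]]_(K, M)) (P : 'I_K -> R) (k : 'I_K) : R :=
  complex.Re (qf (row k H) (invmx (Amat H P k))).

Arguments DET {R K M} H P n.
Arguments qv {R K M} H P k.


Lemma qv_ge0 {R : rcfType} {K M} (H : 'M[R[i]]_(K, M)) (P : 'I_K -> R) k :
  (forall j, 0 <= P j) -> 0 <= qv H P k /\ qf (row k H) (invmx (Amat H P k)) = (qv H P k)%:C.
Proof.
move=> hP; have h0 := @Bm_inv_qf_ge0 _ _ _ H P (fun j => (j < k)%N) (row k H) (fun j _ => hP j).
by split; [rewrite -ler0c -ge0_RRe | rewrite -ge0_RRe].
Qed.

Lemma DET_step {R : rcfType} {K M} (H : 'M[R[i]]_(K, M)) (P : 'I_K -> R) (k : 'I_K) :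
  (forall j, 0 <= P j) -> DET H P k.+1 = DET H P k * (1 + P k * qv H P k)%:C.
Proof.
move=> hP; rewrite /DET Bm_lt_step det_update; last exact: Bm_unit.
by have [_ e] := qv_ge0 H P k hP; rewrite -Amat_Bm e rmorphD rmorph1 rmorphM.
Qed.

Lemma DET_ge1 {R : rcfType} {K M} (H : 'M[R[i]]_(K, M)) (P : 'I_K -> R) (n : nat) :
  (forall j, 0 <= P j) -> (n <= K)%N -> 1 <= DET H P n.
Proof.
move=> hP; elim: n => [_|n IH hn].
  rewrite /DET (@Bm_ext _ _ _ H P P _ pred0) // /Bm big_pred0 // addr0 det1 //.
have hk : (n < K)%N by exact: hn.
have -> : n = Ordinal hk by [].
rewrite DET_step //; apply: mulr_ege1; first exact: IH (ltnW hk).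
rewrite [X in X <= _](_ : _ = 1%:C) // lecR lerDl; apply: mulr_ge0 => //; exact: (qv_ge0 H P _ hP).1.
Qed.

Lemma real_step {R : realType} (Q dl t d a b : R) :
  0 < Q -> - Q <= dl -> 0 < d -> d <= t -> 0 < a -> 0 < b ->
  b = a * (1 + dl * (t / (1 + Q * t))) ->
  ln b - ln a <= dl / Q + 1 / (1 + Q * d).
Proof.
move=> hQ hdl hd hdt ha hb eb.
have ht : 0 < t by exact: lt_le_trans hdt.
have hQt : 0 < 1 + Q * t by rewrite addr_gt0 // mulr_gt0.
have hQd : 0 < 1 + Q * d by rewrite addr_gt0 // mulr_gt0.
set x := dl * (t / (1 + Q * t)).
have hx : 0 < 1 + x.
  by move: hb; rewrite eb pmulr_rgt0.
have -> : ln b - ln a = ln (1 + x).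
  by rewrite eb lnM ?posrE // addrAC subrr add0r.
apply: le_trans (le_ln1Dx _) _; first by rewrite -subr_gt0 opprK addrC.
have hw : -1 <= dl / Q by rewrite ler_pdivlMr // mulN1r.
have ex : x = dl / Q - (dl / Q) * (1 / (1 + Q * t)).
  rewrite /x; field; rewrite !gt_eqF //.
have huv : 1 / (1 + Q * t) <= 1 / (1 + Q * d).
  rewrite !div1r lef_pV2 ?posrE // lerD2l ler_pM2l //.
have hu : 0 < 1 / (1 + Q * t) by rewrite divr_gt0.
rewrite ex; nra.
Qed.

Definition Xp {R : rcfType} {K} (P' Q : 'I_K -> R) (m : nat) : 'I_K -> R :=
  fun j => if (j < m)%N then P' j else Q j.

Definition Sx {K} (n : nat) (m : 'I_K) : pred 'I_K := [pred j : 'I_K | (j < n)%N && (j != m)].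

Lemma Bm_Sx {R : rcfType} {K M} (H : 'M[R[i]]_(K, M)) (P : 'I_K -> R) n (m : 'I_K) :
  (m < n)%N ->
  Bm H P (fun j => (j < n)%N) = Bm H P (Sx n m) + (P m)%:C *: (adjmx (row m H) *m row m H).
Proof. by move=> hm; rewrite (Bm_split H P _ m). Qed.

Lemma Bm_path_step {R : rcfType} {K M} (H : 'M[R[i]]_(K, M)) (P' Q : 'I_K -> R) n (m : 'I_K) :
  (m < n)%N ->
  Bm H (Xp P' Q m.+1) (fun j => (j < n)%N) =
  Bm H (Xp P' Q m) (fun j => (j < n)%N) + (P' m - Q m)%:C *: (adjmx (row m H) *m row m H).
Proof.
move=> hm.
rewrite (Bm_Sx H (Xp P' Q m.+1) _ m) // (Bm_Sx H (Xp P' Q m) _ m) //.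
have -> : Bm H (Xp P' Q m.+1) (Sx n m) = Bm H (Xp P' Q m) (Sx n m).
  apply: Bm_ext => // j /andP [_ hj]; rewrite /Xp ltnS leq_eqVlt.
  suff -> : (nat_of_ord j == m) = false by [].
  by apply/negbTE; move: hj; apply: contra => /eqP e; apply/eqP/val_inj.
rewrite /Xp ltnn ltnSn rmorphB scalerBl -(addrA (Bm H (Xp P' Q m) (Sx n m))); congr (_ + _).
by rewrite addrC subrK.
Qed.

Lemma DET_real {R : rcfType} {K M} (H : 'M[R[i]]_(K, M)) (P : 'I_K -> R) (n : nat) :
  (forall j, 0 <= P j) -> (n <= K)%N ->
  DET H P n = (complex.Re (DET H P n))%:C /\ 1 <= complex.Re (DET H P n).
Proof.
move=> hP hn; have h1 := DET_ge1 H P n hP hn.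
have h0 : 0 <= DET H P n by exact: le_trans ler01 h1.
split; first exact: ge0_RRe.
by move: h1; rewrite lecE => /andP [_].
Qed.

Lemma rc_expr {R : rcfType} (a b c : R) :
  (1 + a * (b / (1 + c * b)))%:C = 1 + a%:C * (b%:C / (1 + c%:C * b%:C)) :> R[i].
Proof. by rewrite !(rmorphD, rmorphM, fmorphV, rmorph1). Qed.

Lemma one_step {R : realType} {K M} (H : 'M[R[i]]_(K, M)) (P' Q : 'I_K -> R)
   (r : 'I_K -> 'rV[R[i]]_M) n (m : 'I_K) :
  (forall j, 0 <= P' j) -> (forall j, 0 <= Q j) -> (n <= K)%N -> (m < n)%N -> 0 < Q m ->
  (forall j, j != m -> r m *m adjmx (row j H) = 0) -> r m *m adjmx (row m H) = 1%:M ->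
  ln (complex.Re (DET H (Xp P' Q m.+1) n)) - ln (complex.Re (DET H (Xp P' Q m) n)) <=
  (P' m - Q m) / Q m + 1 / (1 + Q m * (complex.Re ((r m *m adjmx (r m)) 0 0))^-1).
Proof.
move=> hP' hQ hn hm hQm hr1 hr2.
have hX : forall k, (forall j, 0 <= Xp P' Q k j).
  by move=> k j; rewrite /Xp; case: ifP.
set Y := Bm H (Xp P' Q m) (Sx n m).
set G := adjmx (row m H) *m row m H.
have hYu : Y \in unitmx by apply: Bm_unit => j _; exact: hX.
have eZ : Bm H (Xp P' Q m) (fun j => (j < n)%N) = Y + (Q m)%:C *: G.
  by rewrite (Bm_Sx _ _ _ m) // /Xp ltnn.
have hZu : Bm H (Xp P' Q m) (fun j => (j < n)%N) \in unitmx by apply: Bm_unit => j _; exact: hX.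
set t := qf (row m H) (invmx Y).
have ht0 : 0 <= t by apply: Bm_inv_qf_ge0 => j _; exact: hX.
have ht : t = (complex.Re t)%:C by exact: ge0_RRe.
set d := (complex.Re ((r m *m adjmx (r m)) 0 0))^-1.
have hdt : d%:C <= t.
  apply: Bm_inv_lb; first by move=> j _; exact: hX.
    by move=> j /andP [_ hj]; exact: hr1.
  exact: hr2.
have hdt' : d <= complex.Re t by move: hdt; rewrite [X in _ <= X]ht lecR.
have hd : 0 < d.
  rewrite invr_gt0 lt_def; apply/andP; split; last first.
    by have := nrm_ge0 (r m); rewrite lecE => /andP [].
  apply/eqP => e0; have r0 : r m = 0.
    by apply: nrm_eq0; rewrite (ge0_RRe (nrm_ge0 (r m))) e0.
  by move: hr2; rewrite r0 mul0mx => /matrixP/(_ 0 0); rewrite !mxE /= => /eqP; rewrite eq_sym oner_eq0.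
have hpos : 0 < 1 + Q m * complex.Re t.
  by have := mulr_ge0 (ltW hQm) (le_trans (ltW hd) hdt'); lra.
have hne : 1 + (Q m)%:C * t != 0.
  rewrite ht -rmorphM -[1]/(1%:C) -rmorphD; apply/eqP => /complexI/eqP.
  by rewrite gt_eqF.
have eD : DET H (Xp P' Q m.+1) n = DET H (Xp P' Q m) n *
     (1 + (P' m - Q m) * (complex.Re t / (1 + Q m * complex.Re t)))%:C.
  rewrite /DET Bm_path_step // det_update // eZ qf_update //.
  by rewrite rc_expr -/t -ht.
have [ea ha] := DET_real H (Xp P' Q m) n (hX m) hn.
have [eb hb] := DET_real H (Xp P' Q m.+1) n (hX m.+1) hn.
apply: (real_step (Q m) (P' m - Q m) (complex.Re t) d _ _ hQm _ hd hdt' (lt_le_trans ltr01 ha) (lt_le_trans ltr01 hb)).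
  by rewrite -[X in X <= _]add0r lerD2r.
by rewrite eD ea -rmorphM.
Qed.

Lemma big_lt_step {R : zmodType} {K} (F : 'I_K -> R) (k : 'I_K) :
  \sum_(j < K | (j < k.+1)%N) F j = \sum_(j < K | (j < k)%N) F j + F k.
Proof.
rewrite (bigD1 k) //= addrC; congr (_ + _); apply: eq_bigl => j.
by rewrite ltnS ltn_neqAle andbC (inj_eq val_inj).
Qed.

Lemma DET_ext {R : rcfType} {K M} (H : 'M[R[i]]_(K, M)) (P P' : 'I_K -> R) n :
  (forall j : 'I_K, (j < n)%N -> P j = P' j) -> DET H P n = DET H P' n.
Proof. by move=> e; rewrite /DET (Bm_ext H P P' _ _ (fun=> erefl) e). Qed.

Definition dd {R : rcfType} {K M} (r : 'I_K -> 'rV[R[i]]_M) (j : 'I_K) : R :=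
  (complex.Re ((r j *m adjmx (r j)) 0 0))^-1.

Lemma comb3 {R : realDomainType} (a b c x y : R) :
  a - c <= x -> b - a <= y -> b - c <= x + y.
Proof. move=> h1 h2; lra. Qed.

Lemma path_bound {R : realType} {K M} (H : 'M[R[i]]_(K, M)) (P' Q : 'I_K -> R)
   (r : 'I_K -> 'rV[R[i]]_M) n :
  (forall j, 0 <= P' j) -> (forall j, 0 <= Q j) -> (n <= K)%N ->
  (forall j : 'I_K, (j < n)%N -> 0 < Q j) ->
  (forall m j, j != m -> r m *m adjmx (row j H) = 0) ->
  (forall m, r m *m adjmx (row m H) = 1%:M) ->
  ln (complex.Re (DET H P' n)) - ln (complex.Re (DET H Q n)) <=
  \sum_(j < K | (j < n)%N) ((P' j - Q j) / Q j + 1 / (1 + Q j * dd r j)).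
Proof.
move=> hP' hQ hn hQn hr1 hr2.
suff : forall m, (m <= n)%N ->
  ln (complex.Re (DET H (Xp P' Q m) n)) - ln (complex.Re (DET H Q n)) <=
  \sum_(j < K | (j < m)%N) ((P' j - Q j) / Q j + 1 / (1 + Q j * dd r j)).
  move=> /(_ n (leqnn n)).
  suff -> : DET H (Xp P' Q n) n = DET H P' n by [].
  by apply: DET_ext => j hj; rewrite /Xp hj.
elim=> [_|m IH hm].
  have -> : DET H (Xp P' Q 0) n = DET H Q n.
    by apply: DET_ext.
  by rewrite subrr big_pred0.
have hmK : (m < K)%N by exact: leq_trans hm hn.
have := IH (ltnW hm).
have -> : m = Ordinal hmK by [].
rewrite big_lt_step => h.
have h2 := one_step H P' Q r n (Ordinal hmK) hP' hQ hn hm (hQn (Ordinal hmK) hm) (hr1 _) (hr2 _).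
exact: (comb3 _ _ _ _ _ h h2).
Qed.

Definition LL {R : realType} {K M} (H : 'M[R[i]]_(K, M)) (P : 'I_K -> R) (n : nat) : R :=
  ln (complex.Re (DET H P n)).

Lemma term_eq {R : realType} {K M} (H : 'M[R[i]]_(K, M)) (P : 'I_K -> R) (k : 'I_K) :
  (forall j, 0 <= P j) ->
  ln (1 + P k * qv H P k) = LL H P k.+1 - LL H P k.
Proof.
move=> hP; have [e1 h1] := DET_real H P k hP (ltnW (ltn_ord k)).
have hq : 0 <= qv H P k by exact: (qv_ge0 H P k hP).1.
have hpos : 0 < 1 + P k * qv H P k by have := mulr_ge0 (hP k) hq; lra.
rewrite /LL DET_step // e1 -rmorphM /= lnM ?posrE //; last exact: lt_le_trans ltr01 h1.
by rewrite addrAC subrr add0r.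
Qed.

Lemma EF_le {R : realType} {K M} (H : 'M[R[i]]_(K, M)) (mu P' Q : 'I_K -> R)
   (r : 'I_K -> 'rV[R[i]]_M) (k : 'I_K) :
  (forall j, 0 <= P' j) -> (forall j, 0 <= Q j) ->
  (forall i j : 'I_K, (i <= j)%N -> mu j <= mu i) ->
  (forall j, 0 < mu j -> 0 < Q j) ->
  (forall m j, j != m -> r m *m adjmx (row j H) = 0) ->
  (forall m, r m *m adjmx (row m H) = 1%:M) ->
  0 < mu k ->
  LL H P' k.+1 - LL H Q k.+1 <=
  \sum_(j < K | (j < k.+1)%N) ((P' j - Q j) / Q j + 1 / (1 + Q j * dd r j)).
Proof.
move=> hP' hQ hmu hQmu hr1 hr2 hk.
apply: path_bound => // j hj; apply: hQmu; apply: lt_le_trans hk _; apply: hmu.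
by rewrite -ltnS.
Qed.

Lemma factX {R : realType} {K M} (H : 'M[R[i]]_(K, M)) (mu P' Q : 'I_K -> R)
   (r : 'I_K -> 'rV[R[i]]_M) (k : 'I_K) (c : R) :
  (forall j, 0 <= P' j) -> (forall j, 0 <= Q j) ->
  (forall j, 0 <= mu j) ->
  (forall i j : 'I_K, (i <= j)%N -> mu j <= mu i) ->
  (forall j, 0 < mu j -> 0 < Q j) ->
  (forall m j, j != m -> r m *m adjmx (row j H) = 0) ->
  (forall m, r m *m adjmx (row m H) = 1%:M) ->
  0 <= c -> c <= mu k ->
  (mu k - c) * ((LL H P' k.+1 - LL H Q k.+1) -
     \sum_(j < K | (j < k.+1)%N) ((P' j - Q j) / Q j + 1 / (1 + Q j * dd r j))) <= 0.
Proof.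
move=> hP' hQ hmu0 hmu hQmu hr1 hr2 hc hck.
have [hk|hk] := boolP (0 < mu k).
  apply: mulr_ge0_le0; first by rewrite subr_ge0.
  rewrite subr_le0; exact: (EF_le H mu P' Q r k).
have e0 : mu k = 0 by apply/eqP; rewrite eq_le hmu0 andbT leNgt.
have -> : c = 0 by apply/eqP; rewrite eq_le hc andbT -e0.
by rewrite e0 subrr mul0r.
Qed.

Lemma abel_step {R : realDomainType} (S1 S2 m1 m2 a1 a2 b1 b2 F1 G1 f : R) :
  S2 = S1 + m2 * ((a2 - a1) - (b2 - b1)) ->
  S1 <= m1 * ((a1 - b1) - F1) + G1 ->
  (m1 - m2) * ((a1 - b1) - F1) <= 0 ->
  S2 <= m2 * ((a2 - b2) - (F1 + f)) + (G1 + m2 * f).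
Proof. move=> -> h1 h2; nra. Qed.

Lemma big_lt_stepN {R : zmodType} {K} (F : 'I_K -> R) n (hn : (n < K)%N) :
  \sum_(j < K | (j < n.+1)%N) F j = \sum_(j < K | (j < n)%N) F j + F (Ordinal hn).
Proof. exact: (big_lt_step F (Ordinal hn)). Qed.

Lemma big_lt0 {R : zmodType} {K} (F : 'I_K -> R) :
  \sum_(j < K | (j < 0)%N) F j = 0.
Proof. by rewrite big_pred0 // => j; rewrite ltn0. Qed.

Lemma abel_base {R : realDomainType} (m a0 a1 b1 f : R) :
  m * ((a1 - a0) - (b1 - a0)) <= m * ((a1 - b1) - (0 + f)) + (0 + m * f).
Proof. nra. Qed.

Definition Tm {R : realType} {K M} (H : 'M[R[i]]_(K, M)) (P : 'I_K -> R) (k : 'I_K) : R :=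
  ln (1 + P k * qv H P k).

Definition fF {R : realType} {K M} (P' Q : 'I_K -> R) (r : 'I_K -> 'rV[R[i]]_M) (j : 'I_K) : R :=
  (P' j - Q j) / Q j + 1 / (1 + Q j * dd r j).

Lemma Tm_eq {R : realType} {K M} (H : 'M[R[i]]_(K, M)) (P : 'I_K -> R) (k : 'I_K) :
  (forall j, 0 <= P j) -> Tm H P k = LL H P k.+1 - LL H P k.
Proof. exact: term_eq. Qed.

Lemma abel_ind {R : realType} {K M} (H : 'M[R[i]]_(K, M)) (mu P' Q : 'I_K -> R)
   (r : 'I_K -> 'rV[R[i]]_M) :
  (forall j, 0 <= P' j) -> (forall j, 0 <= Q j) ->
  (forall j, 0 <= mu j) ->
  (forall i j : 'I_K, (i <= j)%N -> mu j <= mu i) ->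
  (forall j, 0 < mu j -> 0 < Q j) ->
  (forall m j, j != m -> r m *m adjmx (row j H) = 0) ->
  (forall m, r m *m adjmx (row m H) = 1%:M) ->
  forall n (hn : (n < K)%N),
  \sum_(k < K | (k < n.+1)%N) mu k * (Tm H P' k - Tm H Q k) <=
  mu (Ordinal hn) * ((LL H P' n.+1 - LL H Q n.+1) - \sum_(j < K | (j < n.+1)%N) fF P' Q r j)
  + \sum_(j < K | (j < n.+1)%N) mu j * fF P' Q r j.
Proof.
move=> hP' hQ hmu0 hmu hQmu hr1 hr2; elim=> [|n IH] hn.
  rewrite !(big_lt_stepN _ 0 hn).
rewrite !big_lt0.
rewrite add0r (Tm_eq H P' _ hP') (Tm_eq H Q _ hQ).
  have e : DET H P' 0 = DET H Q 0 by apply: DET_ext => j; rewrite ltn0.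
  rewrite /LL /= e.
  exact: abel_base.
have hn1 : (n < K)%N by exact: ltnW.
rewrite !(big_lt_stepN _ n.+1 hn).
apply: (abel_step _ _ _ _ _ _ _ _ _ _ _ _ (IH hn1)).
- by rewrite (Tm_eq H P' _ hP') (Tm_eq H Q _ hQ).
- have hX := factX H mu P' Q r (Ordinal hn1) (mu (Ordinal hn)) hP' hQ hmu0 hmu hQmu hr1 hr2 (hmu0 _) (hmu (Ordinal hn1) (Ordinal hn) (leqnSn n)).
  exact: hX.
Qed.

Lemma e_pos {R : rcfType} {M} (r h : 'rV[R[i]]_M) :
  r *m adjmx h = 1%:M -> 0 < complex.Re ((r *m adjmx r) 0 0).
Proof.
move=> hr2; rewrite lt_def; apply/andP; split; last first.
  by have := nrm_ge0 r; rewrite lecE => /andP [].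
apply/eqP => e0; have r0 : r = 0.
  by apply: nrm_eq0; rewrite (ge0_RRe (nrm_ge0 r)) e0.
by move: hr2; rewrite r0 mul0mx => /matrixP/(_ 0 0); rewrite !mxE /= => /eqP; rewrite eq_sym oner_eq0.
Qed.

Lemma big_full {R : zmodType} {K} n (F : 'I_K -> R) :
  n.+1 = K -> \sum_(k < K | (k < n.+1)%N) F k = \sum_(k < K) F k.
Proof. by move=> e; apply: eq_bigl => k; rewrite e ltn_ord. Qed.

Lemma term_bound {R : realType} (mu P P' d : R) :
  0 <= mu -> 0 < P -> 0 <= P' -> 0 < d ->
  mu * ((P' - mu * P) / (mu * P) + 1 / (1 + mu * P * d)) <= (P' - mu * P) / P + d^-1 / P.
Proof.
move=> hmu hP hP' hd.
have [->|hm] := eqVneq mu 0.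
  rewrite !mul0r subr0; apply: addr_ge0; apply: divr_ge0 => //; try exact: ltW; rewrite invr_ge0; exact: ltW.
have hm' : 0 < mu by rewrite lt_def hm.
have hu : 0 < 1 + mu * P * d by rewrite addr_gt0 // !mulr_gt0.
have e1 : mu * ((P' - mu * P) / (mu * P)) = (P' - mu * P) / P.
  by field; rewrite hm gt_eqF.
have e2 : d^-1 / P - mu * (1 / (1 + mu * P * d)) = 1 / (d * P * (1 + mu * P * d)).
  by field; rewrite !gt_eqF.
have h3 : 0 <= 1 / (d * P * (1 + mu * P * d)) by rewrite divr_ge0 // ltW // !mulr_gt0.
rewrite mulrDr e1 lerD2l -subr_ge0 e2 //.
Qed.

Lemma dd_pos {R : rcfType} {K M} (H : 'M[R[i]]_(K, M)) (r : 'I_K -> 'rV[R[i]]_M) j :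
  (forall m, r m *m adjmx (row m H) = 1%:M) -> 0 < dd r j.
Proof. by move=> hr2; rewrite /dd invr_gt0; exact: (e_pos (r j) (row j H) (hr2 j)). Qed.

Lemma rate_Tm {R : realType} {K M} (mu : 'I_K -> R) (H : 'M[R[i]]_(K, M)) (X : 'I_K -> R) :
  rate mu H X = (\sum_(k < K) mu k * Tm H X k) / ln 2.
Proof. by rewrite /rate /log2 mulr_suml; apply: eq_bigr => k _; rewrite mulrA. Qed.

Lemma rate_diff {R : realType} {K M} (H : 'M[R[i]]_(K, M)) (mu P' : 'I_K -> R) (P : R)
   (r : 'I_K -> 'rV[R[i]]_M) :
  (0 < K)%N -> 0 < P ->
  (forall j, 0 <= mu j) ->
  (forall i j : 'I_K, (i <= j)%N -> mu j <= mu i) ->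
  \sum_(k < K) mu k = 1 ->
  (forall j, 0 <= P' j) -> \sum_(k < K) P' k <= P ->
  (forall m j, j != m -> r m *m adjmx (row j H) = 0) ->
  (forall m, r m *m adjmx (row m H) = 1%:M) ->
  rate mu H P' - rate mu H (fun k => mu k * P) <=
  (\sum_(j < K) complex.Re ((r j *m adjmx (r j)) 0 0)) / P / ln 2.
Proof.
move=> hK hP hmu0 hmu hsum hP' hsP hr1 hr2.
set Q := fun k => mu k * P.
have hQ : forall j, 0 <= Q j by move=> j; rewrite /Q mulr_ge0 // ltW.
have hQmu : forall j, 0 < mu j -> 0 < Q j by move=> j hj; rewrite /Q mulr_gt0.
have hln : 0 < ln (2 : R) by apply: ln_gt0; lra.
rewrite !rate_Tm -mulrBl ler_pM2r ?invr_gt0 //.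
rewrite -sumrB.
have e : (K.-1).+1 = K by rewrite prednK.
have hn : (K.-1 < K)%N by rewrite prednK.
have h1 := abel_ind H mu P' Q r hP' hQ hmu0 hmu hQmu hr1 hr2 (K.-1) hn.
have h2 := factX H mu P' Q r (Ordinal hn) 0 hP' hQ hmu0 hmu hQmu hr1 hr2 (lexx 0) (hmu0 _).
have h3 : mu (Ordinal hn) * ((LL H P' K.-1.+1 - LL H Q K.-1.+1) -
     \sum_(j < K | (j < K.-1.+1)%N) fF P' Q r j) <= 0.
  by move: h2; rewrite subr0.
have h4 := le_trans h1 (lerD h3 (lexx _)).
rewrite add0r !(big_full _ _ e) in h4.
have -> : \sum_(i < K) (mu i * Tm H P' i - mu i * Tm H Q i) =
          \sum_(i < K) mu i * (Tm H P' i - Tm H Q i).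
  by apply: eq_bigr => i _; rewrite mulrBr.
apply: (le_trans h4); rewrite /fF /Q.
apply: (le_trans (y := \sum_(j < K) ((P' j - mu j * P) / P + (dd r j)^-1 / P))).
  apply: ler_sum => j _; exact: term_bound (hmu0 j) hP (hP' j) (dd_pos H r j hr2).
rewrite big_split /= -!mulr_suml sumrB -mulr_suml hsum mul1r.
have -> : \sum_(i < K) (dd r i)^-1 = \sum_(j < K) complex.Re ((r j *m adjmx (r j)) 0 0).
  by apply: eq_bigr => i _; rewrite /dd invrK.
by rewrite -mulrDl ler_pM2r ?invr_gt0 // gerDr subr_le0.
Qed.

Lemma lim_aux {R : realType} (g : R -> R) (c : R) : 0 <= c ->
  (forall P, 0 < P -> 0 <= g P <= c / P) -> (g P @[P --> +oo%R] --> 0%R)%classic.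
Proof.
move=> hc hg; apply/cvgrPdist_le => eps he.
exists (c / eps); split; first by rewrite num_real.
move=> x hx.
have hx0 : 0 < x by apply: le_lt_trans hx; rewrite divr_ge0 // ltW.
have /andP [h1 h2] := hg x hx0.
rewrite sub0r normrN ger0_norm //; apply: le_trans h2 _.
rewrite ler_pdivrMr // mulrC -ler_pdivrMr //; exact: ltW.
Qed.

Lemma adjmx_scalar {R : rcfType} (c : R[i]) : adjmx (c%:M : 'M[R[i]]_1) = (conjc c)%:M.
Proof. by apply/matrixP => a b; rewrite !ord1 /adjmx !mxE /= !mulr1n. Qed.

Local Close Scope complex_scope.
Local Open Scope classical_set_scope.

Theorem theorem7 (R : realType) (K M : nat) (H : 'M[R[i]]_(K, M)) (mu : 'I_K -> R) :
  (K <= M)%N ->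
  row_free H ->
  (forall k, 0 <= mu k) ->
  (forall i j : 'I_K, (i <= j)%N -> mu j <= mu i) ->
  \sum_(k < K) mu k = 1 ->
  (C_DPC mu H P - rate mu H (fun k => mu k * P)) @[P --> +oo%R] --> 0%R.
Proof.
case: K H mu => [|K] H mu hKM hfree hmu0 hmu hsum.
  by move: hsum; rewrite big_ord0 => /eqP; rewrite eq_sym oner_eq0.
have [B hB] := row_freeP hfree.
pose r := fun m : 'I_K.+1 => adjmx (col m B).
have key : forall j m, row j H *m col m B = ((j == m)%:R)%:M.
  move=> j m; apply/matrixP => a b; rewrite !ord1.
  move/matrixP: hB => /(_ j m); rewrite [in RHS]mxE /= => <-.
  by rewrite !mxE /= mulr1n; apply: eq_bigr => k _; rewrite !mxE.
have hr1 : forall m j, j != m -> r m *m adjmx (row j H) = 0.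
  move=> m j hjm; rewrite /r -adjmxM key (negbTE hjm) adjmx_scalar conjc0.
  by apply/matrixP => a b; rewrite !mxE mul0rn.
have hr2 : forall m, r m *m adjmx (row m H) = 1%:M.
  by move=> m; rewrite /r -adjmxM key eqxx adjmx_scalar conjc1.
pose D := \sum_(j < K.+1) complex.Re ((r j *m adjmx (r j)) 0 0).
have hD : 0 <= D.
  apply: sumr_ge0 => j _; have := nrm_ge0 (r j).
  by rewrite lecE => /andP [].
have hln : 0 < ln (2 : R) by apply: ln_gt0; lra.
apply: (lim_aux _ (D / ln 2)); first by rewrite divr_ge0 // ltW.
move=> P hP.
set Rq := rate mu H (fun k => mu k * P).
have hub : ubound [set x | exists P0 : 'I_K.+1 -> R,
         [/\ (forall k, 0 <= P0 k), \sum_(k < K.+1) P0 k <= P & x = rate mu H P0]]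
     (Rq + D / P / ln 2).
  move=> x [P0 [h0 hs ->]].
  have := rate_diff H mu P0 P r (ltn0Sn K) hP hmu0 hmu hsum h0 hs hr1 hr2.
  by rewrite -/Rq lerBlDl addrC.
have hin : [set x | exists P0 : 'I_K.+1 -> R,
         [/\ (forall k, 0 <= P0 k), \sum_(k < K.+1) P0 k <= P & x = rate mu H P0]] Rq.
  exists (fun k => mu k * P); split => //.
  - by move=> k; rewrite mulr_ge0 // ltW.
  - by rewrite -mulr_suml hsum mul1r.
have h1 := ub_le_sup (ex_intro _ _ hub) hin.
have h2 := ge_sup (ex_intro _ _ hin) hub.
rewrite /C_DPC -/Rq; apply/andP; split; first by rewrite subr_ge0.
by rewrite lerBlDl mulrAC.
Qed.
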